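(* Let $n,m\ge1$ be integers (not necessarily distinct). Then for the Ramsey number $\mathcal{R}_{\mathcal{II}}$ with respect to the class $\mathcal{II}$ of inclusion ideal graphs, \[ \mathcal{R}_{\mathcal{II}}(n,m)=\mathcal{R}_{\mathcal{PO}}(n,m)=(n-1)(m-1)+1 . \]
   Context: For a ring $R$ (with $1\ne0$, not necessarily commutative), a left ideal $I$ is non-trivial if $I\ne\{0\}$ and $I\ne R$. The inclusion ideal graph $\mathrm{In}(R)$ is the simple undirected graph whose vertices are the non-trivial left ideals of $R$, distinct $I,J$ adjacent iff $I\subset J$ or $J\subset I$; $\mathcal{II}$ is the class of all inclusion ideal graphs. $\mathcal{PO}$ is the class of partial order graphs $G_A$ of posets $(A,\le)$ (vertex set $A$, distinct $a,b$ adjacent iff $a\le b$ or $b\le a$). For a class $\mathcal{C}$ of graphs, $\mathcal{R}_{\mathcal{C}}(n,m)$ is the minimal $r$ such that every induced subgraph with $r$ vertices of any graph in $\mathcal{C}$ contains either $K_n$ or an independent set of $m$ vertices. *)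

(* Defs.v *)
From mathcomp Require Import all_boot all_algebra.
From mathcomp Require Import boolp classical_sets.
Set Implicit Arguments. Unset Strict Implicit. Unset Printing Implicit Defensive.
Import GRing.Theory.
Local Open Scope ring_scope.
Local Open Scope classical_set_scope.

(* ---------- Generic (simple) graphs, given by a vertex predicate and an
   adjacency relation on a carrier type V (only distinct pairs matter). ---- *)

Definition has_clique_or_indep (V : Type) (adj : V -> V -> Prop)
    (n m r : nat) (f : 'I_r -> V) : Prop :=
  (exists g : 'I_n -> 'I_r, injective g /\
     forall i j, i != j -> adj (f (g i)) (f (g j))) \/
  (exists g : 'I_m -> 'I_r, injective g /\
     forall i j, i != j -> ~ adj (f (g i)) (f (g j))).

Definition graph_ramsey_prop (V : Type) (vert : V -> Prop)
    (adj : V -> V -> Prop) (n m r : nat) : Prop :=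
  forall f : 'I_r -> V, injective f -> (forall i, vert (f i)) ->
    has_clique_or_indep adj n m f.

Definition is_least (P : nat -> Prop) (r : nat) : Prop :=
  P r /\ forall r', P r' -> (r <= r')%N.

Definition is_left_ideal (R : nzRingType) (I : set R) : Prop :=
  I 0 /\ (forall x y, I x -> I y -> I (x - y)) /\
  (forall r x, I x -> I (r * x)).

Definition nontrivial_left_ideal (R : nzRingType) (I : set R) : Prop :=
  is_left_ideal I /\ I <> [set (0 : R)] /\ I <> [set: R].

Definition inclusion_adj (R : nzRingType) (I J : set R) : Prop :=
  I `<` J \/ J `<` I.

Definition II_ramsey_prop (n m r : nat) : Prop :=
  forall R : nzRingType,
    graph_ramsey_prop (@nontrivial_left_ideal R) (@inclusion_adj R) n m r.

Definition is_partial_order (A : Type) (le : A -> A -> Prop) : Prop :=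
  (forall a, le a a) /\ (forall a b, le a b -> le b a -> a = b) /\
  (forall a b c, le a b -> le b c -> le a c).

Definition po_adj (A : Type) (le : A -> A -> Prop) (a b : A) : Prop :=
  le a b \/ le b a.

Definition PO_ramsey_prop (n m r : nat) : Prop :=
  forall (A : Type) (le : A -> A -> Prop), is_partial_order le ->
    graph_ramsey_prop (fun _ : A => True) (po_adj le) n m r.

Definition R_II_is (n m r : nat) : Prop := is_least (II_ramsey_prop n m) r.
Definition R_PO_is (n m r : nat) : Prop := is_least (PO_ramsey_prop n m) r.

(* Main.v *)
Require Import Defs.
From mathcomp Require Import all_boot all_algebra.
From mathcomp Require Import boolp classical_sets.
From mathcomp Require Import zify.
From Stdlib Require Import Classical.
Set Implicit Arguments. Unset Strict Implicit. Unset Printing Implicit Defensive.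

Module P1.

Lemma pick_inj r k (C : {set 'I_r}) : (k <= #|C|)%N ->
  exists g : 'I_k -> 'I_r, injective g /\ forall i, g i \in C.
Proof.
move=> h; exists (fun i => enum_val (widen_ord h i)); split.
  by move=> i j /enum_val_inj /(congr1 val) /= /val_inj.
by move=> i; exact: enum_valP.
Qed.

Lemma po_chain (A : Type) (le : A -> A -> Prop) (hle : is_partial_order le)
  r (f : 'I_r -> A) (finj : injective f) m :
  ~ (exists g : 'I_m -> 'I_r, injective g /\
       forall i j, i != j -> ~ po_adj le (f (g i)) (f (g j))) ->
  forall k (S : {set 'I_r}), (k * (m-1) < #|S|)%N ->
  exists C : {set 'I_r}, exists t, C \subset S /\ #|C| = k.+1 /\ t \in C /\
    (forall c, c \in C -> le (f c) (f t)) /\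
    (forall c c', c \in C -> c' \in C -> po_adj le (f c) (f c')).
Proof.
case: hle => [refl [anti trans]] noanti.
elim=> [|k IH] S hS.
  have [i iS] : exists i, i \in S.
    by apply/set0Pn; rewrite -card_gt0; lia.
  exists [set i], i; split; first by rewrite finset.sub1set.
  split; first by rewrite cards1.
  split; first by rewrite set11.
  split; first by move=> c /set1P ->.
  by move=> c c' /set1P -> /set1P ->; left.
pose M := [set i in S | `[< forall j, j \in S -> j != i -> ~ le (f i) (f j) >]].
have MS : M \subset S by apply/fintype.subsetP => i; rewrite inE => /andP [].
have cM : (#|M| <= m - 1)%N.
  rewrite leqNgt; apply/negP => hM.
  have hM' : (m <= #|M|)%N by lia.
  have [g [ginj gM]] := pick_inj hM'.
  apply: noanti; exists g; split => // i j ij.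
  have gij : g i != g j by apply: contra ij => /eqP /ginj ->.
  have := gM i; rewrite inE => /andP [giS /asboolP Hi].
  have := gM j; rewrite inE => /andP [gjS /asboolP Hj].
  case=> H.
    by apply: (Hi (g j)) => //; rewrite eq_sym.
  by apply: (Hj (g i)).
have cS' : (k * (m-1) < #|S :\: M|)%N.
  rewrite (cardsDS MS); move: hS; rewrite mulSn; lia.
have [C [t [CS [cC [tC [top ch]]]]]] := IH _ cS'.
have tS : t \in S :\: M by apply: (fintype.subsetP CS).
move: tS; rewrite !inE => /andP [tnM tS].
have [j [jS [jt ltj]]] : exists j, j \in S /\ j != t /\ le (f t) (f j).
  apply: NNPP => H; move: tnM; rewrite tS /= => /negP; apply.
  apply/asboolP => j jS jt lt; apply: H; exists j; split => //.
have jC : j \notin C.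
  apply/negP => jC; have := top _ jC => ljt.
  by move: jt; rewrite (finj _ _ (anti _ _ ljt ltj)) eqxx.
have topj : forall c, c \in j |: C -> le (f c) (f j).
  move=> c; rewrite in_setU1 => /orP [/eqP -> //|cC'].
  exact: trans (top _ cC') ltj.
exists (j |: C), j; split.
  apply/fintype.subsetP => c; rewrite in_setU1 => /orP [/eqP -> //|cC'].
  by have := fintype.subsetP CS c cC'; rewrite inE => /andP [].
split; first by rewrite cardsU1 jC cC.
split; first by rewrite setU11.
split => // c c' hc hc'.
move: (hc) (hc'); rewrite !in_setU1 => /orP [/eqP ->|cC'] /orP [/eqP ->|cC''].
- by left.
- by right; apply: topj.
- by left; apply: topj.
- by apply: ch.
Qed.

End P1.
Import P1.

Module P2.
Local Open Scope classical_set_scope.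

Lemma po_ramsey (A : Type) (le : A -> A -> Prop) (hle : is_partial_order le)
  n m (hn : (1 <= n)%N) (f : 'I_((n - 1) * (m - 1) + 1) -> A) (finj : injective f) :
  has_clique_or_indep (po_adj le) n m f.
Proof.
case: (classic (exists g : 'I_m -> 'I_((n - 1) * (m - 1) + 1), injective g /\
       forall i j, i != j -> ~ po_adj le (f (g i)) (f (g j)))) => H; first by right.
have cT : ((n-1) * (m-1) < #|[set: 'I_((n - 1) * (m - 1) + 1)]%SET|)%N.
  by rewrite cardsT card_ord; lia.
have [C [t [_ [cC [_ [_ ch]]]]]] := po_chain hle finj H cT.
have hC : (n <= #|C|)%N by rewrite cC; lia.
have [g [ginj gC]] := pick_inj hC.
left; exists g; split => // i j _; exact: ch.
Qed.

Lemma subset_po T : is_partial_order (fun A B : set T => A `<=` B).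
Proof.
split; first by move=> a x.
split; first by move=> a b ab ba; apply/seteqP; split.
by move=> a b c ab bc x /ab /bc.
Qed.

Lemma II_pos n m (hn : (1 <= n)%N) : II_ramsey_prop n m ((n - 1) * (m - 1) + 1).
Proof.
move=> R f finj _.
have [[g [ginj H]]|[g [ginj H]]] := po_ramsey (subset_po R) hn finj.
  left; exists g; split => // i j ij.
  have ne : f (g i) <> f (g j).
    by move=> /finj /ginj e; move: ij; rewrite e eqxx.
  case: (H i j ij) => s; [left|right]; split => // s'; apply: ne;
    apply/seteqP; split => //.
right; exists g; split => // i j ij [[s _]|[s _]]; apply: (H i j ij); by [left|right].
Qed.

Lemma PO_pos n m (hn : (1 <= n)%N) : PO_ramsey_prop n m ((n - 1) * (m - 1) + 1).
Proof. by move=> A le hle f finj _; apply: po_ramsey. Qed.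

End P2.
Import P2.

Module P3.
Local Open Scope classical_set_scope.

Lemma no_ramsey (V : Type) (adj : V -> V -> Prop) n m r (f : 'I_r -> V)
  (col lev : 'I_r -> nat) :
  (0 < n)%N -> (0 < m)%N ->
  (forall i, col i < m - 1)%N -> (forall i, lev i < n - 1)%N ->
  (forall i j, col i = col j -> lev i = lev j -> i = j) ->
  (forall i j, i != j -> adj (f i) (f j) -> col i = col j) ->
  (forall i j, i != j -> col i = col j -> adj (f i) (f j)) ->
  ~ has_clique_or_indep adj n m f.
Proof.
move=> hn hm hc hl cinj ac ca [[g [ginj H]]|[g [ginj H]]].
  case: n hn g ginj H hl => // n' _ g ginj H hl.
  have ce : forall a, col (g a) = col (g ord0).
    move=> a; case: (eqVneq a ord0) => [->//|ne].
    apply: ac; first by apply: contra ne => /eqP /ginj ->.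
    exact: H.
  pose h := fun a => Ordinal (hl (g a)).
  have hinj : injective h.
    move=> a b /(congr1 val) /= e; apply: ginj; apply: cinj => //.
    by rewrite !ce.
  by have := leq_card h hinj; rewrite !card_ord; lia.
pose h := fun a => Ordinal (hc (g a)).
have hinj : injective h.
  move=> a b /(congr1 val) /= e; case: (eqVneq a b) => [//|ne].
  exfalso; apply: (H a b ne); apply: ca => //.
  by apply: contra ne => /eqP /ginj ->.
by have := leq_card h hinj; rewrite !card_ord; lia.
Qed.

Lemma enc_ok n m r (hr : (r <= (n - 1) * (m - 1))%N) :
  [/\ forall i : 'I_r, (i %/ (n - 1) < m - 1)%N,
      forall i : 'I_r, (i %% (n - 1) < n - 1)%N &
      forall i j : 'I_r, i %/ (n - 1) = j %/ (n - 1) ->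
                         i %% (n - 1) = j %% (n - 1) -> i = j].
Proof.
split.
- move=> i; have : (0 < (n - 1) * (m - 1))%N by have := ltn_ord i; lia.
  rewrite muln_gt0 => /andP [h1 h2].
  rewrite ltn_divLR //; rewrite mulnC; have := ltn_ord i; lia.
- move=> i; have : (0 < (n - 1) * (m - 1))%N by have := ltn_ord i; lia.
  rewrite muln_gt0 => /andP [h1 h2]; exact: ltn_pmod.
- move=> i j e1 e2; apply: val_inj.
  by rewrite [val i](divn_eq _ (n - 1)) [val j](divn_eq _ (n - 1)) e1 e2.
Qed.

Definition lep (x y : nat * nat) : Prop := x.1 = y.1 /\ (x.2 <= y.2)%N.

Lemma lep_po : is_partial_order lep.
Proof.
split; first by move=> [a b]; split.
split.
  move=> [a b] [c d] [/= e1 h1] [/= e2 h2]; congr pair => //; lia.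
by move=> [a b] [c d] [e f] [/= e1 h1] [/= e2 h2]; split => /=; lia.
Qed.

Lemma PO_neg n m (hn : (0 < n)%N) (hm : (0 < m)%N) r :
  (r <= (n - 1) * (m - 1))%N -> ~ PO_ramsey_prop n m r.
Proof.
move=> hr H.
have [hc hl cinj] := enc_ok hr.
pose f := fun i : 'I_r => (val i %/ (n - 1), val i %% (n - 1)).
have finj : injective f.
  by move=> i j [e1 e2]; apply: cinj.
have := H _ _ lep_po f finj (fun _ => I).
apply: (no_ramsey (col := fun i => val i %/ (n - 1)) (lev := fun i => val i %% (n - 1))) => //.
- by move=> i j _ [[]|[]].
- move=> i j _ e; rewrite /po_adj /lep /=.
  case: (leqP (i %% (n - 1)) (j %% (n - 1))) => h; [left|right]; split => //.
  exact: ltnW.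
Qed.

End P3.
Import P3.

Module P4.
Import GRing.Theory.
Local Open Scope classical_set_scope.

Fixpoint pr (k : nat) : nat :=
  match k with 0 => 2 | k.+1 => s2val (prime_above (pr k)) end.

Lemma pr_prime k : prime (pr k).
Proof. by case: k => [//|k] /=; case: prime_above. Qed.

Lemma pr_lt k : (pr k < pr k.+1)%N.
Proof. by rewrite /=; case: prime_above. Qed.

Lemma pr_mono i j : (i < j)%N -> (pr i < pr j)%N.
Proof.
elim: j => // j IH; rewrite ltnS leq_eqVlt => /orP [/eqP ->|h].
  exact: pr_lt.
exact: ltn_trans (IH h) (pr_lt j).
Qed.

Lemma pr_inj : injective pr.
Proof.
move=> i j e; case: (ltngtP i j) => // h.
  by have := pr_mono h; rewrite e ltnn.
by have := pr_mono h; rewrite e ltnn.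
Qed.

Definition Id (d : nat) : set int := [set x | exists y : int, x = (y * d%:Z%R)%R].

Lemma Id_nat a b : Id b (a%:Z%R) -> (b %| a)%N.
Proof.
move=> [y e]; apply/dvdnP; exists `|y|%N.
by have := congr1 absz e; rewrite abszM.
Qed.

Lemma Id_self d : Id d (d%:Z%R).
Proof. by exists 1%R; rewrite mul1r. Qed.

Lemma Id_sub a b : (b %| a)%N -> Id a `<=` Id b.
Proof.
move=> /dvdnP [k ->] x [y ->]; exists (y * k%:Z%R)%R.
by rewrite PoszM mulrA.
Qed.

Lemma Id_nt d : (1 < d)%N -> nontrivial_left_ideal (Id d).
Proof.
move=> hd; split; [split; [|split]|split].
- by exists 0%R; rewrite mul0r.
- by move=> x y [a ->] [b ->]; exists (a - b)%R; rewrite mulrBl.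
- by move=> r x [a ->]; exists (r * a)%R; rewrite mulrA.
- move=> E; have := Id_self d; rewrite E /= => e.
  by move: e => [] d0; rewrite d0 in hd.
- move=> E; have : Id d 1%R by rewrite E.
  by move=> /(@Id_nat 1); rewrite dvdn1 => /eqP e; move: hd; rewrite e.
Qed.

Lemma sub_col c l c' l' :
  Id (pr c ^ l.+1) `<=` Id (pr c' ^ l'.+1) -> c = c'.
Proof.
move=> s; have := s _ (Id_self _) => /Id_nat h.
have : (pr c' %| pr c ^ l.+1)%N.
  apply: dvdn_trans h; exact: dvdn_exp.
rewrite Euclid_dvdX ?pr_prime // andbT dvdn_prime2 ?pr_prime // => /eqP e.
by apply: pr_inj.
Qed.

Lemma strict_lev c l l' : (l < l')%N ->
  Id (pr c ^ l'.+1) `<` Id (pr c ^ l.+1).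
Proof.
move=> h; split.
  by apply: Id_sub; apply: dvdn_exp2l; lia.
move=> s; have := s _ (Id_self _) => /Id_nat hd.
have p1 : (1 < pr c)%N by apply: prime_gt1; apply: pr_prime.
have pos : (0 < pr c ^ l.+1)%N by rewrite expn_gt0; lia.
by have := dvdn_leq pos hd; rewrite leqNgt ltn_exp2l // ltnS h.
Qed.

End P4.
Import P4.

Module P5.
Import GRing.Theory.
Local Open Scope classical_set_scope.

Lemma II_neg n m (hn : (0 < n)%N) (hm : (0 < m)%N) r :
  (r <= (n - 1) * (m - 1))%N -> ~ II_ramsey_prop n m r.
Proof.
move=> hr H.
have [hc hl cinj] := enc_ok hr.
pose f := fun i : 'I_r => Id (pr (val i %/ (n - 1)) ^ (val i %% (n - 1)).+1).
have adjc : forall i j : 'I_r, i != j -> (i %/ (n - 1) = j %/ (n - 1))%N ->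
    inclusion_adj (f i) (f j).
  move=> i j ij e; rewrite /inclusion_adj /f e.
  case: (ltngtP (i %% (n - 1)) (j %% (n - 1))) => h.
  - by right; apply: strict_lev.
  - by left; apply: strict_lev.
  - by move: ij; rewrite (cinj _ _ e h) eqxx.
have finj : injective f.
  move=> i j e; case: (eqVneq i j) => // ij.
  have ce : (i %/ (n - 1) = j %/ (n - 1))%N.
    by apply: (@sub_col _ (i %% (n - 1)) _ (j %% (n - 1))); rewrite -/(f i) -/(f j) e.
  by have := adjc _ _ ij ce; rewrite /inclusion_adj e => -[[_ []]|[_ []]].
have vert : forall i, nontrivial_left_ideal (f i).
  move=> i; apply: Id_nt.
  have p1 : (1 < pr (i %/ (n - 1)))%N by apply: prime_gt1; apply: pr_prime.
  by rewrite (leq_trans p1) // -{1}(expn1 (pr _)) leq_pexp2l //; lia.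
have := H _ f finj vert.
apply: (no_ramsey (col := fun i => val i %/ (n - 1)) (lev := fun i => val i %% (n - 1))) => //.
- by move=> i j _ [[s _]|[s _]]; [apply: (sub_col s)|symmetry; apply: (sub_col s)].
Qed.


End P5.
Import P5.

Theorem theorem3p12 (n m : nat) (hn : (1 <= n)%N) (hm : (1 <= m)%N) :
  R_II_is n m ((n - 1) * (m - 1) + 1) /\ R_PO_is n m ((n - 1) * (m - 1) + 1).
Proof.
split; split.
- exact: II_pos.
- move=> r' P; rewrite leqNgt; apply/negP => h.
  by apply: (II_neg hn hm (r := r')) => //; lia.
- exact: PO_pos.
- move=> r' P; rewrite leqNgt; apply/negP => h.
  by apply: (PO_neg hn hm (r := r')) => //; lia.
Qed.
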